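(* Let $g$ be a principal solution of a system $T$. Then the rank of $g$ equals the cardinality of ${\rm alp}(g)$. Moreover, if $h=\vartheta\circ g$ for a morphism $\vartheta$, then the rank of $h$ is at most the rank of $g$.
   Context: A solution of a system $T$ of word equations is a morphism $h$ from ${\rm alp}(T)^*$ (the unknowns of $T$) to a free monoid with $h(u)=h(v)$ for all $(u,v)\in T$; ${\rm alp}(h)$ is the set of letters occurring in images $h(x)$. For $h:\{x_1,\dots,x_n\}^*\to\{a_1,\dots,a_k\}^*$, $\gamma(h)_i=(|h(x_1)|_{a_i},\dots,|h(x_n)|_{a_i})\in\mathbb Q^n$, and the rank of $h$ is the dimension of the $\mathbb Q$-span of $\gamma(h)_1,\dots,\gamma(h)_k$. A solution $h'$ divides a solution $h$ if $h=\vartheta\circ h'$ with $\vartheta$ non-erasing and defined on ${\rm alp}(h')$; a solution $g$ is principal if whenever $g=\vartheta\circ h'$ for a solution $h'$ and non-erasing $\vartheta$, $\vartheta$ is a renaming of letters. *)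

(* Defs.v *)
From HB Require Import structures.
From mathcomp Require Import all_boot all_order all_algebra.
Set Implicit Arguments. Unset Strict Implicit. Unset Printing Implicit Defensive.
Import GRing.Theory Num.Theory.

(* Unknowns are x_1..x_n, modelled as 'I_n; letters of an alphabet
   {a_1..a_k} are modelled as 'I_k.  A morphism from X^* to B^* is given by
   its values on letters, h : X -> seq B, extended to words by [wext]. *)
Definition wext (X B : Type) (h : X -> seq B) (w : seq X) : seq B :=
  flatten (map h w).

Definition system (n : nat) := seq (seq 'I_n * seq 'I_n).

Definition alp_sys_full (n : nat) (T : system n) : Prop :=
  forall x : 'I_n, exists2 uv, uv \in T & (x \in uv.1) || (x \in uv.2).

Definition is_solution (n k : nat) (T : system n) (h : 'I_n -> seq 'I_k) : Prop :=
  forall uv, uv \in T -> wext h uv.1 = wext h uv.2.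

Definition alp (n k : nat) (h : 'I_n -> seq 'I_k) : {set 'I_k} :=
  [set a | [exists x, a \in h x]].

Definition gamma_mx (n k : nat) (h : 'I_n -> seq 'I_k) : 'M[rat]_(k, n) :=
  \matrix_(i < k, j < n) ((count_mem i (h j))%:R : rat).

Definition rank_of (n k : nat) (h : 'I_n -> seq 'I_k) : nat :=
  \rank (gamma_mx h).

Definition nonerasing_on (k m : nat) (S : {set 'I_k}) (t : 'I_k -> seq 'I_m) : Prop :=
  forall a, a \in S -> t a <> [::].

Definition renaming_on (k m : nat) (S : {set 'I_k}) (t : 'I_k -> seq 'I_m) : Prop :=
  (forall a, a \in S -> size (t a) = 1%N) /\ {in S &, injective t}.

Definition principal (n k : nat) (T : system n) (g : 'I_n -> seq 'I_k) : Prop :=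
  is_solution T g /\
  forall (k' : nat) (h' : 'I_n -> seq 'I_k') (t : 'I_k' -> seq 'I_k),
    is_solution T h' ->
    nonerasing_on (alp h') t ->
    (forall x, g x = wext t (h' x)) ->
    renaming_on (alp h') t.

(* Main.v *)
Require Import Defs.
From mathcomp Require Import all_boot all_order all_algebra.
Set Implicit Arguments. Unset Strict Implicit. Unset Printing Implicit Defensive.
Import GRing.Theory Num.Theory.
Local Open Scope ring_scope.

Definition wsum k (w : 'I_k -> rat) (s : seq 'I_k) : rat := \sum_(a <- s) w a.

Fixpoint blk k (w : 'I_k -> rat) (cur s : seq 'I_k) : seq (seq 'I_k) :=
  match s with
  | [::] => if cur is [::] then [::] else [:: cur]
  | a :: s' => if wsum w (rcons cur a) == 0 then rcons cur a :: blk w [::] s'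
               else blk w (rcons cur a) s'
  end.

Lemma wsum_cat k (w : 'I_k -> rat) s1 s2 : wsum w (s1 ++ s2) = wsum w s1 + wsum w s2.
Proof. by rewrite /wsum big_cat. Qed.

Lemma wsum_rcons k (w : 'I_k -> rat) s a : wsum w (rcons s a) = wsum w s + w a.
Proof. by rewrite -cats1 wsum_cat /wsum big_seq1. Qed.

Lemma wsum_nil k (w : 'I_k -> rat) : wsum w [::] = 0.
Proof. by rewrite /wsum big_nil. Qed.

Lemma blk_flatten k (w : 'I_k -> rat) s cur : flatten (blk w cur s) = cur ++ s.
Proof.
elim: s cur => [|a s IH] cur /=; first by case: cur => //= b c; rewrite cats0.
case: ifP => _ /=; last by rewrite IH cat_rcons.
by rewrite IH cat_rcons.
Qed.

Lemma blk_cat k (w : 'I_k -> rat) s1 s2 cur :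
  (cur = [::] \/ wsum w cur != 0) -> wsum w (cur ++ s1) = 0 ->
  blk w cur (s1 ++ s2) = blk w cur s1 ++ blk w [::] s2.
Proof.
elim: s1 cur => [|a s1 IH] cur Hc Hs /=.
  rewrite cats0 in Hs; case: Hc => [->|/eqP] //.
case: ifP => H0.
  rewrite IH //; first by left.
  by move: Hs; rewrite -cat_rcons wsum_cat (eqP H0) add0r.
rewrite IH //; first by right; rewrite H0.
by rewrite cat_rcons.
Qed.

Lemma blk_nonnil k (w : 'I_k -> rat) s cur b : b \in blk w cur s -> b <> [::].
Proof.
elim: s cur => [|a s IH] cur /=.
  by case: cur => //= c l; rewrite inE => /eqP ->.
case: ifP => _; last exact: IH.
rewrite inE => /orP [/eqP -> | /IH //]; by case: cur.
Qed.

Lemma blk_sum0 k (w : 'I_k -> rat) s cur b :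
  b \in blk w cur s -> wsum w (cur ++ s) = 0 -> wsum w b = 0.
Proof.
elim: s cur => [|a s IH] cur /=.
  by rewrite cats0; case: cur => //= c l; rewrite inE => /eqP ->.
case: ifP => H0.
  rewrite inE => /orP [/eqP -> _ | Hb Hs]; first exact/eqP.
  apply: (IH [::]) => //; move: Hs; by rewrite -cat_rcons wsum_cat (eqP H0) add0r.
by move=> Hb; rewrite -cat_rcons; apply: IH.
Qed.

Lemma sum_count k (F : 'I_k -> rat) (s : seq 'I_k) :
  \sum_(a <- s) F a = \sum_a (count_mem a s)%:R * F a.
Proof.
elim: s => [|b s IH]; first by rewrite big_nil big1 // => a _; rewrite mul0r.
rewrite big_cons IH /= (bigD1 b) //= (bigD1 b (P := predT)) //= eqxx.
rewrite natrD mulrDl mul1r addrA; congr (_ + _).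
apply: eq_bigr => a /negbTE Hab; by rewrite eq_sym Hab add0n.
Qed.

Lemma blocks_wext n k (w : 'I_k -> rat) (g : 'I_n -> seq 'I_k) u :
  (forall x, wsum w (g x) = 0) ->
  blk w [::] (wext g u) = flatten (map (fun x => blk w [::] (g x)) u).
Proof.
move=> H; elim: u => [|x u IH] //=.
rewrite /wext /= in IH *; by rewrite (blk_cat _ (or_introl erefl) (H x)) IH.
Qed.

Lemma principal_w n k (T : system n) (g : 'I_n -> seq 'I_k) (w : 'I_k -> rat) :
  principal T g -> (forall x, wsum w (g x) = 0) ->
  forall x a, a \in g x -> w a = 0.
Proof.
move=> [Hsol Hpr] Hw.
pose bl x := blk w [::] (g x).
pose L := undup (flatten (map bl (enum 'I_n))).
pose enc (b : seq 'I_k) : 'I_(size L).+1 := inord (index b L).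
pose t (j : 'I_(size L).+1) := nth [::] L j.
have inL x b : b \in bl x -> b \in L.
  by move=> Hb; rewrite mem_undup; apply/flattenP; exists (bl x) => //; apply: map_f; rewrite mem_enum.
have tenc x b : b \in bl x -> t (enc b) = b.
  move=> Hb; rewrite /t /enc inordK; first by rewrite nth_index // (inL x).
  by apply: (leq_trans _ (leqnSn _)); rewrite index_mem (inL x).
pose h' x := map enc (bl x).
have Hsol' : is_solution T h'.
  move=> uv Huv; have := Hsol uv Huv.
  have E u : wext h' u = map enc (blk w [::] (wext g u)).
    rewrite blocks_wext // /wext map_flatten -map_comp; congr flatten.
  rewrite !E => ->; done.
have Hg x : g x = wext t (h' x).
  rewrite /wext /h' -map_comp.
  have -> : map (t \o enc) (bl x) = map id (bl x).
    by apply/eq_in_map => b Hb /=; apply: (tenc x).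
  by rewrite map_id blk_flatten.
have Hne : nonerasing_on (alp h') t.
  move=> j; rewrite inE => /existsP [x]; rewrite /h' => /mapP [b Hb ->].
  rewrite (tenc x) //; exact: blk_nonnil Hb.
have [Hsz _] := Hpr _ _ _ Hsol' Hne Hg.
move=> x a Ha.
have : a \in flatten (bl x) by rewrite blk_flatten.
move=> /flattenP [b Hb Hab].
have : size b = 1%N.
  rewrite -(tenc x b Hb); apply: Hsz; rewrite inE; apply/existsP; exists x.
  by apply: map_f.
case: b Hb Hab => [|c [|]] //= Hb; rewrite inE => /eqP Hac _.
have := blk_sum0 Hb; rewrite /= => /(_ (Hw x)).
by rewrite /wsum big_seq1 Hac.
Qed.

Lemma gamma_row n k (g : 'I_n -> seq 'I_k) (v : 'rV[rat]_k) x :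
  (v *m gamma_mx g) 0 x = wsum (fun a => v 0 a) (g x).
Proof.
rewrite /wsum sum_count !mxE; apply: eq_bigr => a _; by rewrite mxE mulrC.
Qed.

Lemma gamma_comp n k m (g : 'I_n -> seq 'I_k) (t : 'I_k -> seq 'I_m) :
  gamma_mx (fun x => wext t (g x)) =
  (\matrix_(c, a) ((count_mem c (t a))%:R : rat)) *m gamma_mx g.
Proof.
apply/matrixP => c x; rewrite !mxE /wext count_flatten sumnE natr_sum.
rewrite [LHS]big_map [LHS]big_map [LHS]sum_count.
by apply: eq_bigr => a _; rewrite !mxE mulrC.
Qed.

Lemma lemma2p2_aux (n k : nat) (T : system n) (g : 'I_n -> seq 'I_k) :
  alp_sys_full T ->
  principal T g ->
  rank_of g = #|alp g| /\
  (forall (m : nat) (t : 'I_k -> seq 'I_m),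
     rank_of (fun x => wext t (g x)) <= rank_of g)%N.
Proof.
move=> _ Hpr; split; last first.
  by move=> m t; rewrite /rank_of gamma_comp mxrankM_maxr.
set A := alp g.
set M := gamma_mx g.
set M' := rowsub (enum_val (A := mem A)) M.
have eqr : \rank M = \rank M'.
  apply/eqP; rewrite eqn_leq; apply/andP; split; last exact: mxrankS (rowsub_sub _ _).
  apply: mxrankS; apply/row_subP => a.
  case: (boolP (a \in A)) => Ha.
    by rewrite -(enum_rankK_in Ha Ha) -row_rowsub row_sub.
  have -> : row a M = 0.
    apply/rowP => x; rewrite !mxE.
    case: (boolP (a \in g x)) => Hx; last by rewrite (count_memPn Hx).
    by case/negP: Ha; rewrite inE; apply/existsP; exists x.
  exact: sub0mx.
rewrite /rank_of -/M eqr; apply/eqP; rewrite -/(row_free M') -kermx_eq0.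
apply/negPn/negP => Hk.
have [i Hi] : exists i, row i (kermx M') != 0.
  case: (pickP (fun i => row i (kermx M') != 0)) => [i Hi|H]; first by exists i.
  case/negP: Hk; apply/eqP/row_matrixP => i; rewrite row0; apply/eqP.
  by have := H i => /= /negbFE.
set v := row i (kermx M') in Hi.
have Hv : v *m M' = 0 by apply/sub_kermxP; exact: row_sub.
pose w (a : 'I_k) := \sum_j v 0 j * ((a == enum_val (A := mem A) j)%:R : rat).
have wval j : w (enum_val j) = v 0 j.
  rewrite /w (bigD1 j) //= eqxx mulr1 big1 ?addr0 // => j' Hj'.
  by rewrite (inj_eq enum_val_inj) eq_sym (negbTE Hj') mulr0.
have Hw x : wsum w (g x) = 0.
  move/matrixP: Hv => /(_ 0 x); rewrite [RHS]mxE => <-.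
  rewrite mxE /wsum sum_count /w.
  under eq_bigr do rewrite mulr_sumr.
  rewrite exchange_big /=; apply: eq_bigr => j _.
  rewrite (bigD1 (enum_val j)) //= eqxx mulr1 big1 ?addr0.
    by rewrite mulrC; congr (_ * _); rewrite !mxE.
  by move=> a Ha; rewrite (negbTE Ha) !mulr0.
have := principal_w Hpr Hw.
move=> H0; case/negP: Hi; apply/eqP/rowP => j; rewrite [RHS]mxE -wval.
have : enum_val j \in A by apply: enum_valP.
rewrite inE => /existsP [x Hx].
exact: H0 x _ Hx.
Qed.

Local Close Scope ring_scope.

Theorem lemma2p2 (n k : nat) (T : system n) (g : 'I_n -> seq 'I_k) :
  alp_sys_full T ->
  principal T g ->
  rank_of g = #|alp g| /\
  (forall (m : nat) (t : 'I_k -> seq 'I_m),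
     rank_of (fun x => wext t (g x)) <= rank_of g).
Proof. exact: lemma2p2_aux. Qed.
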